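(* Let $r\ge1$ and $G\subset\mathbb{Z}_2^r$ a subgroup with $1^r=(1,\dots,1)\in G$. Then: (1) if $\dim G=1$, then $G=\langle1^r\rangle$; (2) if $\dim G=r$, then $G=\mathbb{Z}_2^r$; (3) if $\dim G=2$, then $G$ is decomposable; (4) if $\dim G=r-1$ and $G$ is indecomposable, then $r$ is even and $G=G_r^{\rm even}$.
   Context: $\dim G$ is the dimension over $\mathbb{Z}_2$. For $I\subset\{1,\dots,r\}$ let $\mathbb{Z}_2^I$ be the codewords supported in $I$. $G$ is decomposable if there is a partition $\{1,\dots,r\}=I\sqcup J$ with $I,J$ nonempty and $G=(G\cap\mathbb{Z}_2^I)\oplus(G\cap\mathbb{Z}_2^J)$ (i.e. $G$ is an orthogonal direct sum $G_1\perp G_2$ of codes on complementary coordinate sets); indecomposable otherwise. For even $r$, $G_r^{\rm even}=\{g\in\mathbb{Z}_2^r: g \text{ has an even number of nonzero coordinates}\}$. *)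

(* Defs.v *)
From HB Require Import structures.
From mathcomp Require Import all_boot all_order all_algebra.
Set Implicit Arguments. Unset Strict Implicit. Unset Printing Implicit Defensive.
Import GRing.Theory.
Local Open Scope ring_scope.

(* Z_2^r is modelled as row vectors 'rV['F_2]_r; subgroups of Z_2^r are
   exactly the 'F_2-subspaces, i.e. elements of {vspace 'rV['F_2]_r}. *)

Definition ones (r : nat) : 'rV['F_2]_r := const_mx 1.

Definition supported_in (r : nat) (I : {set 'I_r}) (v : 'rV['F_2]_r) : Prop :=
  forall i : 'I_r, i \notin I -> v 0 i = 0.

(* G is decomposable: there is a partition {1..r} = I ⊔ J, I, J nonempty,
   with G = (G ∩ Z_2^I) ⊕ (G ∩ Z_2^J) (the sum is automatically direct and
   the inclusion ⊇ is automatic, so we state ⊆ explicitly). *)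
Definition decomposable (r : nat) (G : {vspace 'rV['F_2]_r}) : Prop :=
  exists I : {set 'I_r},
    [/\ I != set0, ~: I != set0 &
      forall g, g \in G ->
        exists g1 g2, [/\ g = g1 + g2,
          g1 \in G, supported_in I g1,
          g2 \in G & supported_in (~: I) g2]].

Definition weight (r : nat) (v : 'rV['F_2]_r) : nat := #|[set i | v 0 i != 0]|.

Definition even_code (r : nat) : pred 'rV['F_2]_r := fun v => ~~ odd (weight v).
Arguments ones r : clear implicits.
Arguments even_code r : clear implicits.

(* Main.v *)
Require Import Defs.
From HB Require Import structures.
From mathcomp Require Import all_boot all_order all_algebra.
From mathcomp Require Import zify.
Import GRing.Theory.
Local Open Scope ring_scope.

Lemma f2_cases (a : 'F_2) : a = 0 \/ a = 1.
Proof. case: a => [[|[|]]] //= ?; [left|right]; exact/val_inj. Qed.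

Lemma f2_addxx (a : 'F_2) : a + a = 0.
Proof. by case: (f2_cases a) => ->; apply/eqP. Qed.

Lemma rv_addxx r (y : 'rV['F_2]_r) : y + y = 0.
Proof. by apply/rowP => i; rewrite !mxE f2_addxx. Qed.

Lemma dimfull r : \dim (fullv : {vspace 'rV['F_2]_r}) = r.
Proof. by rewrite dimvf /dim /= mul1n. Qed.

Section Codim1.
Variables (r : nat) (G : {vspace 'rV['F_2]_r}) (v : 'rV['F_2]_r).
Hypothesis hv : v \notin G.
Hypothesis hd : \dim G = r.-1.

Lemma key x : x \notin G -> x + v \in G.
Proof.
move=> xG.
have xU : x \in (G + <[x]>)%VS.
  apply/memv_addP; exists 0; first exact: mem0v.
  by exists x; [exact: memv_line | rewrite add0r].
have GU : (G <= G + <[x]>)%VS by exact: addvSl.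
have hne : ~~ (\dim (G + <[x]>) <= \dim G)%N.
  apply/negP => hle.
  have /eqP E : G == (G + <[x]>)%VS by rewrite eqEdim GU hle.
  by move: xG; rewrite E xU.
have hU : (G + <[x]>)%VS == fullv.
  rewrite eqEdim subvf dimfull.
  move: hne; rewrite hd => hne. lia.
have : v \in (G + <[x]>)%VS by rewrite (eqP hU) memvf.
case/memv_addP => a aG [b /vlineP [k ->] vE].
case: (f2_cases k) => k0; rewrite k0 in vE.
  by move: hv; rewrite vE scale0r addr0 aG.
by rewrite vE scale1r addrC -addrA rv_addxx addr0.
Qed.

Lemma padd x y : (x + y \notin G) = (x \notin G) (+) (y \notin G).
Proof.
case: (boolP (x \in G)) => xG; case: (boolP (y \in G)) => yG /=.
- by rewrite memvD.
- apply/negP => h; move: yG; have -> : y = (x + y) - x by rewrite addrC addKr.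
  by rewrite memvB.
- apply/negP => h; move: xG; have -> : x = (x + y) - y by rewrite addrK.
  by rewrite memvB.
- rewrite /=; apply: negbF.
  have -> : x + y = (x + v) + (y + v).
    by rewrite addrACA rv_addxx addr0.
  by rewrite memvD // key.
Qed.

Definition S := [set i | 'e_i \notin G].

Lemma pformula x : (x \notin G) = odd #|[set i | x 0 i != 0] :&: S|.
Proof.
rewrite {1}(row_sum_delta x).
rewrite (big_morph (fun y => y \notin G) padd (id1 := false)); last by rewrite mem0v.
rewrite -sum1_card (big_morph odd oddD (id1 := false)) //.
rewrite [RHS]big_mkcond /=; apply: eq_bigr => i _; rewrite !inE.
case: (f2_cases (x 0 i)) => ->.
  by rewrite scale0r mem0v eqxx.
by rewrite scale1r; case: ('e_i \notin G).
Qed.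

End Codim1.

Theorem mainTheorem17 (r : nat) (G : {vspace 'rV['F_2]_r}) :
  (1 <= r)%N -> ones r \in G ->
  [/\ (\dim G = 1)%N -> G = <[ones r]>%VS,
      (\dim G = r)%N -> G = fullv,
      (\dim G = 2)%N -> decomposable G
    & (\dim G = r.-1)%N -> ~ decomposable G ->
        ~~ odd r /\ G =i even_code r].
Proof.
move=> hr hones.
have o0 : ones r != 0.
  apply/eqP => /rowP /(_ (Ordinal hr)); rewrite !mxE.
  by move/eqP; rewrite oner_eq0.
split.
- move=> hd; apply/eqP; rewrite eq_sym eqEdim -memvE hones dim_vline o0 hd.
  by [].
- by move=> hd; apply/eqP; rewrite eqEdim subvf dimfull hd leqnn.
- move=> hd.
  case: (pickP [pred x | (x \in G) && (x \notin <[ones r]>%VS)]) => [g /= /andP [gG gn]|h]; last first.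
    have : (G <= <[ones r]>)%VS.
      apply/subvP => x xG; move: (h x) => /=; rewrite xG /=; exact: negbFE.
    move/dimvS; rewrite dim_vline o0 hd; by [].
  set U := (<[ones r]> + <[g]>)%VS.
  have UG : (U <= G)%VS by rewrite subv_add -!memvE hones gG.
  have gU : g \in U.
    apply/memv_addP; exists 0; first exact: mem0v.
    by exists g; [exact: memv_line | rewrite add0r].
  have hne : ~~ (\dim U <= \dim <[ones r]>)%N.
    apply/negP => hle.
    have /eqP E : <[ones r]>%VS == U by rewrite eqEdim addvSl hle.
    by move: gn; rewrite E gU.
  have /eqP EU : U == G.
    rewrite eqEdim UG hd; move: hne; rewrite dim_vline o0 /=; lia.
  exists [set i | g 0 i != 0]; split.
  + apply/negP => /eqP I0; move: gn; suff -> : g = 0 by rewrite mem0v.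
    apply/rowP => i; have : i \notin [set i | g 0 i != 0] by rewrite I0 inE.
    by rewrite inE negbK mxE => /eqP.
  + apply/negP => /eqP I0; move: gn; suff -> : g = ones r by rewrite memv_line.
    apply/rowP => i; have : i \in [set i | g 0 i != 0].
      by apply/negPn; rewrite -in_setC I0 in_set0.
    rewrite inE !mxE; by case: (f2_cases (g 0 i)) => ->.
  + move=> x xG; have : x \in U by rewrite EU.
    case/memv_addP =>  [a /vlineP [k1 ->] [b /vlineP [k2 ->] ->]].
    exists ((k1 + k2) *: g), (k1 *: (ones r + g)); split.
    * apply/rowP => i; rewrite !mxE.
      by case: (f2_cases k1) => ->; case: (f2_cases k2) => ->;
        case: (f2_cases (g 0 i)) => ->; apply/eqP.
    * exact: memvZ.
    * by move=> i; rewrite inE negbK mxE => /eqP ->; rewrite mulr0.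
    * by rewrite memvZ // memvD.
    * move=> i; rewrite !inE negbK !mxE.
      by case: (f2_cases (g 0 i)) => -> //= _; case: (f2_cases k1) => ->; apply/eqP.
- move=> hd hnd.
  have nf : G != fullv.
    apply/negP => /eqP hG; move: hd; rewrite hG dimfull; lia.
  have [v hv] : exists v, v \notin G.
    case: (pickP [pred x | x \notin G]) => [v hv|h]; first by exists v.
    exfalso; move/negP: nf; apply; apply/eqP/vspaceP => x.
    by rewrite memvf; move: (h x) => /= /negbFE.
  have pf := @pformula r G v hv hd.
  case: (boolP (S r G == setT)) => HS.
    have ones_set : [set i | ones r 0 i != 0] = setT.
      by apply/setP => i; rewrite !inE mxE oner_neq0.
    split.
      by have := pf (ones r); rewrite hones (eqP HS) setIT ones_set cardsT card_ord => <-.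
    move=> x; rewrite -[x \in G]negbK pf (eqP HS) setIT.
    by rewrite unfold_in /even_code /weight.
  exfalso; apply: hnd; exists (S r G); split.
  + apply/negP => /eqP S0. by have := pf v; rewrite hv S0 setI0 cards0.
  + apply/negP => /eqP /(congr1 (fun A => ~: A)); rewrite setCK setC0 => E.
    by rewrite E eqxx in HS.
  + move=> g gG.
    exists (\row_i (if i \in S r G then g 0 i else 0)),
           (\row_i (if i \in S r G then 0 else g 0 i)); split.
    * by apply/rowP => i; rewrite !mxE; case: (i \in S r G); rewrite ?addr0 ?add0r.
    * rewrite -[_ \in G]negbK pf.
      have -> : [set i | (\row_i0 (if i0 \in S r G then g 0 i0 else 0)) 0 i != 0] :&: S r G
              = [set i | g 0 i != 0] :&: S r G.
        by apply/setP => i; rewrite /S !inE mxE !inE; case: (_ \notin G); rewrite ?andbT ?andbF ?eqxx.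
      by rewrite -pf negbK.
    * by move=> i /negbTE hi; rewrite mxE hi.
    * rewrite -[_ \in G]negbK pf.
      have -> : [set i | (\row_i0 (if i0 \in S r G then 0 else g 0 i0)) 0 i != 0] :&: S r G
              = set0.
        by apply/setP => i; rewrite /S !inE mxE !inE; case: (_ \notin G); rewrite ?andbT ?andbF ?eqxx.
      by rewrite cards0.
    * by move=> i; rewrite inE negbK => hi; rewrite mxE hi.
Qed.
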